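(* Let $k\ge2$. For every nonzero $\xi\in\mathbb{R}^4$ the sequence $0\leftarrow\mathbb{C}^{k+1}\xleftarrow{D_0^{(k)}(\xi)^t}\mathbb{C}^{2k}\xleftarrow{D_1^{(k)}(\xi)^t}\mathbb{C}^{k-1}\leftarrow0$ is exact.
   Context: Put $a=\frac1i(\xi_0-i\xi_1)$, $\bar a'=\frac1i(\xi_0+i\xi_1)$, $b=\frac1i(\xi_2-i\xi_3)$, $\bar b'=\frac1i(\xi_2+i\xi_3)$. $D_0^{(k)}(\xi)$ is the $(2k)\times(k+1)$ matrix whose rows $2j$, $2j+1$ ($j=0,\dots,k-1$, rows/columns indexed from $0$) are: row $2j$ has entry $-\bar b'$ in column $j$ and $-\bar a'$ in column $j+1$; row $2j+1$ has entry $a$ in column $j$ and $-b$ in column $j+1$; all other entries $0$. $D_1^{(k)}(\xi)$ is the $(k-1)\times(2k)$ matrix whose row $j$ ($j=0,\dots,k-2$) has entries $-a,-\bar b',b,-\bar a'$ in columns $2j,2j+1,2j+2,2j+3$ and zeros elsewhere. (These are the symbols of the $k$-Cauchy–Fueter operators, obtained by replacing $\partial_{x_l}$ by $\frac1i\xi_l$.) $t$ denotes transpose; exactness means $D_0^{(k)}(\xi)^t$ is surjective, $D_1^{(k)}(\xi)^t$ injective, and $\operatorname{Im}D_1^{(k)}(\xi)^t=\ker D_0^{(k)}(\xi)^t$. *)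

(* Defs.v *)
From HB Require Import structures.
From mathcomp Require Import all_boot all_order all_algebra.
From mathcomp Require Import complex.
From mathcomp Require Import Rstruct.
From Stdlib Require Rdefinitions.
Set Implicit Arguments. Unset Strict Implicit. Unset Printing Implicit Defensive.
Import Order.TTheory GRing.Theory Num.Theory.
Local Open Scope ring_scope.

Notation C := (complex Rdefinitions.R).

Definition rC (x : Rdefinitions.R) : C := (x%:C)%C.

Section Symbols.
Variable xi : 'I_4 -> Rdefinitions.R.
Let x (l : nat) : C := rC (xi (inord l)).
Let iC : C := 'i%C.

Definition sym_a  : C := iC^-1 * (x 0 - iC * x 1).
Definition sym_a' : C := iC^-1 * (x 0 + iC * x 1).
Definition sym_b  : C := iC^-1 * (x 2 - iC * x 3).
Definition sym_b' : C := iC^-1 * (x 2 + iC * x 3).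
End Symbols.

Definition D0 (k : nat) (xi : 'I_4 -> Rdefinitions.R) : 'M[C]_((2 * k)%N, k.+1) :=
  \matrix_(r < (2 * k)%N, c < k.+1)
    let j := divn r 2 in
    if ~~ odd r then
      (if c == j :> nat then - sym_b' xi
       else if c == j.+1 :> nat then - sym_a' xi else 0)
    else
      (if c == j :> nat then sym_a xi
       else if c == j.+1 :> nat then - sym_b xi else 0).

Definition D1 (k : nat) (xi : 'I_4 -> Rdefinitions.R) : 'M[C]_((k - 1)%N, (2 * k)%N) :=
  \matrix_(j < (k - 1)%N, c < (2 * k)%N)
    if c == (2 * j)%N :> nat then - sym_a xi
    else if c == (2 * j).+1 :> nat then - sym_b' xi
    else if c == (2 * j).+2 :> nat then sym_b xi
    else if c == (2 * j).+3 :> nat then - sym_a' xi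
    else 0.

(* Main.v *)
Require Import Defs.
From HB Require Import structures.
From mathcomp Require Import all_boot all_order all_algebra.
From mathcomp Require Import complex Rstruct.
From mathcomp Require Import ring lra zify.
From Stdlib Require Rdefinitions.
Import Order.TTheory GRing.Theory Num.Theory.
Local Open Scope ring_scope.

Definition at_ (n : nat) (v : 'cV[C]_n) (m : nat) : C :=
  \sum_(r < n) if r.+1 == m then v r 0 else 0.
Arguments at_ {n}.

Lemma at_ord n (v : 'cV[C]_n) (i : 'I_n) : at_ v i.+1 = v i 0.
Proof.
rewrite /at_ (bigD1 i) //= eqxx big1 ?addr0 // => j hj.
by rewrite eqSS (inj_eq val_inj) (negbTE hj).
Qed.

Lemma at_out n (v : 'cV[C]_n) m : (m == 0)%N || (n < m)%N -> at_ v m = 0.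
Proof.
move=> h; rewrite /at_ big1 // => j _; case: eqP => // E.
move: h (ltn_ord j); rewrite -E /=; lia.
Qed.

Lemma at_col n (F : nat -> C) m :
  at_ (\col_(r < n) F r) m = if (0 < m <= n)%N then F m.-1 else 0.
Proof.
case: m => [|m]; first by rewrite at_out.
case: (ltnP m n) => h /=.
  by rewrite (@at_ord _ _ (Ordinal h)) mxE.
by rewrite at_out //; apply/orP; right.
Qed.

Lemma sum_at n (v : 'cV[C]_n) m (al : C) :
  \sum_(r < n) (if r.+1 == m then al else 0) * v r 0 = al * at_ v m.
Proof.
rewrite /at_ mulr_sumr; apply: eq_bigr => r _; case: eqP; rewrite ?mul0r ?mulr0 //.
Qed.

Section S.
Variables (k : nat) (xi : 'I_4 -> Rdefinitions.R).
Local Notation a := (sym_a xi).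
Local Notation a' := (sym_a' xi).
Local Notation b := (sym_b xi).
Local Notation b' := (sym_b' xi).

Lemma D0E (r : 'I_(2 * k)) (c : 'I_k.+1) :
  D0 k xi r c = (if r.+1 == (2 * c).+1 then - b' else 0) + (if r.+1 == (2 * c).+2 then a else 0)
    + (if r.+1 == (2 * c).-1 then - a' else 0) + (if r.+1 == (2 * c)%N then - b else 0).
Proof.
rewrite mxE divn2; have := odd_double_half r.
move: (odd r) (r./2) => o j; rewrite -!mul2n => E.
have := ltn_ord r; have := ltn_ord c.
move: (nat_of_ord r) (nat_of_ord c) E => r0 c0 E h1 h2.
case: o E => /= E;
repeat (case: eqP => ? /=); rewrite ?addr0 ?add0r //; lia.
Qed.

Lemma D1E (j : 'I_(k - 1)) (c : 'I_(2 * k)) :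
  D1 k xi j c = (if j.+1 == c./2.+1 then (if odd c then - b' else - a) else 0)
     + (if j.+1 == c./2 then (if odd c then - a' else b) else 0).
Proof.
rewrite mxE; have := odd_double_half c.
move: (odd c) (c./2) => o h; rewrite -!mul2n => E.
have := ltn_ord j; have := ltn_ord c.
move: (nat_of_ord j) (nat_of_ord c) E => r0 c0 E h1 h2.
case: o E => /= E;
repeat (case: eqP => ? /=); rewrite ?addr0 ?add0r //; lia.
Qed.

Lemma D0T_mul (v : 'cV[C]_(2 * k)) (c : 'I_k.+1) :
  ((D0 k xi)^T *m v) c 0 = - b' * at_ v (2 * c).+1 + a * at_ v (2 * c).+2
     - a' * at_ v (2 * c).-1 - b * at_ v (2 * c)%N.
Proof.
rewrite mxE; under eq_bigr do rewrite mxE D0E !mulrDl.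
rewrite !big_split /= !sum_at; ring.
Qed.

Lemma D1T_mul (z : 'cV[C]_(k - 1)) (c : 'I_(2 * k)) :
  ((D1 k xi)^T *m z) c 0 = (if odd c then - b' else - a) * at_ z (c./2).+1
     + (if odd c then - a' else b) * at_ z c./2.
Proof.
rewrite mxE; under eq_bigr do rewrite mxE D1E !mulrDl.
by rewrite !big_split /= !sum_at.
Qed.

Lemma at_D1T (z : 'cV[C]_(k - 1)) m :
  at_ ((D1 k xi)^T *m z) m = if (0 < m <= 2 * k)%N then
     (if odd m.-1 then - b' else - a) * at_ z ((m.-1)./2).+1
     + (if odd m.-1 then - a' else b) * at_ z (m.-1)./2 else 0.
Proof.
case: m => [|m]; first by rewrite at_out.
case: (ltnP m (2 * k)) => h /=.
  by rewrite (@at_ord _ _ (Ordinal h)) D1T_mul.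
by rewrite at_out //; apply/orP; right.
Qed.
End S.
Lemma Nnz (xi : 'I_4 -> Rdefinitions.R) (hxi : exists l : 'I_4, xi l <> 0%R) :
  sym_a xi * sym_a' xi + sym_b xi * sym_b' xi != 0.
Proof.
rewrite /sym_a /sym_a' /sym_b /sym_b'.
set t := ('i%C : C)^-1. set s := ('i%C : C).
set x0 := rC _. set x1 := rC _. set x2 := rC _. set x3 := rC _.
have -> : t * (x0 - s * x1) * (t * (x0 + s * x1)) + t * (x2 - s * x3) * (t * (x2 + s * x3))
   = t ^+ 2 * (x0 ^+ 2 - s ^+ 2 * x1 ^+ 2 + x2 ^+ 2 - s ^+ 2 * x3 ^+ 2) by ring.
have hs : s ^+ 2 = -1 by apply: sqr_i.
have snz : s != 0 by apply/eqP=> h; move: hs; rewrite h expr0n /= => /eqP; rewrite eq_sym oppr_eq0 oner_eq0.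
rewrite hs mulf_eq0 negb_or expf_eq0 /= invr_eq0 snz /=.
have -> : x0 ^+ 2 - -1 * x1 ^+ 2 + x2 ^+ 2 - -1 * x3 ^+ 2 = 
  rC (xi (inord 0) ^+ 2 + xi (inord 1) ^+ 2 + xi (inord 2) ^+ 2 + xi (inord 3) ^+ 2).
  by rewrite /rC !rmorphD !rmorphXn /=; rewrite -/x0 -/x1 -/x2 -/x3; ring.
apply/eqP => /complexI/eqP.
apply/negP; rewrite lt0r_neq0 //.
case: hxi => l hl.
have hl2 : 0 < xi l ^+ 2 by rewrite exprn_even_gt0 //; apply/eqP.
have := sqr_ge0 (xi (inord 0)); have := sqr_ge0 (xi (inord 1)).
have := sqr_ge0 (xi (inord 2)); have := sqr_ge0 (xi (inord 3)).
case: l hl hl2 => [[|[|[|[|//]]]] Hl] /= hl hl2;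
  (have E : forall m (H : (m < 4)%N), (inord m : 'I_4) = Ordinal H by move=> m H; apply: val_inj; rewrite /= inordK);
  rewrite ?(E 0%N Hl) ?(E 1%N Hl) ?(E 2%N Hl) ?(E 3%N Hl); lra.
Qed.

Lemma pq_lem (a a' b b' p q : C) : a * a' + b * b' != 0 ->
  - b' * ((- b * p - a * q) / (a * a' + b * b')) + a * ((a' * p - b' * q) / (a * a' + b * b')) = p /\
  - a' * ((- b * p - a * q) / (a * a' + b * b')) - b * ((a' * p - b' * q) / (a * a' + b * b')) = q.
Proof. by move=> hN; split; field. Qed.

Lemma ker_lem (a a' b b' U W U' W' : C) : a * a' + b * b' != 0 ->
  - b' * U + a * W - a' * U' - b * W' = 0 ->
  U = - a * (- (a' * U + b * W) / (a * a' + b * b')) + b * (- (a' * U' + b * W') / (a * a' + b * b')) /\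
  W = - b' * (- (a' * U + b * W) / (a * a' + b * b')) - a' * (- (a' * U' + b * W') / (a * a' + b * b')).
Proof.
move=> hN hY; split; apply/eqP; rewrite -subr_eq0; apply/eqP.
  have -> : U - (- a * (- (a' * U + b * W) / (a * a' + b * b')) + b * (- (a' * U' + b * W') / (a * a' + b * b')))
    = - b / (a * a' + b * b') * (- b' * U + a * W - a' * U' - b * W') by field.
  by rewrite hY mulr0.
have -> : W - (- b' * (- (a' * U + b * W) / (a * a' + b * b')) - a' * (- (a' * U' + b * W') / (a * a' + b * b')))
    = a' / (a * a' + b * b') * (- b' * U + a * W - a' * U' - b * W') by field.
by rewrite hY mulr0.
Qed.

Lemma odd2 j : odd (2 * j) = false. Proof. by rewrite mul2n odd_double. Qed.
Lemma half2 j : (2 * j)./2 = j. Proof. by rewrite mul2n doubleK. Qed.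
Lemma half2S j : ((2 * j).+1)./2 = j. Proof. by rewrite mul2n /= uphalf_double. Qed.
Lemma uphalf2 j : uphalf (2 * j) = j. Proof. by rewrite mul2n uphalf_double. Qed.

Lemma part1 (k : nat) (hk : (2 <= k)%N) (xi : 'I_4 -> Rdefinitions.R)
  (hxi : exists l : 'I_4, xi l <> 0%R) :
  (forall y : 'cV[C]_(k.+1), exists v : 'cV[C]_((2 * k)%N), (D0 k xi)^T *m v = y).
Proof.
have hN := Nnz xi hxi.
move: hN; set a := sym_a xi; set a' := sym_a' xi; set b := sym_b xi; set b' := sym_b' xi => hN.
move=> y.
pose P j := at_ y j.+1. pose Q j := if j.+1 == k then at_ y k.+1 else 0.
pose N := a * a' + b * b'.
pose F r := if odd r then (a' * P r./2 - b' * Q r./2) / N else (- b * P r./2 - a * Q r./2) / N.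
exists (\col_(r < 2 * k) F r).
apply/colP => c; rewrite D0T_mul !at_col -at_ord -/a -/a' -/b -/b'.
have hc := ltn_ord c.
move: (nat_of_ord c) hc => {}c hc.
have [hck|hck] := ltnP c k.
  have -> : (0 < (2 * c).+1 <= 2 * k)%N by apply/andP; split; lia.
  have -> : (0 < (2 * c).+2 <= 2 * k)%N by apply/andP; split; lia.
  rewrite /= /F /= odd2 half2 uphalf2 /=.
  have [H1 _] := pq_lem a a' b b' (P c) (Q c) hN.
  rewrite -/N in H1.
  case: c hc hck H1 => [|c] hc hck H1.
    rewrite muln0 /= !mulr0 !subr0 H1 //.
  have e : (2 * c.+1 = (2 * c).+2)%N by lia.
  rewrite e /= odd2 half2 uphalf2.
  have -> : ((2 * c).+1 <= 2 * k)%N by lia.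
  have -> : ((2 * c).+2 <= 2 * k)%N by lia.
  have [_ H2] := pq_lem a a' b b' (P c) (Q c) hN.
  rewrite -/N in H2.
  rewrite /=.
  have -> : forall X, X - a' * ((- b * P c - a * Q c) / N) - b * ((a' * P c - b' * Q c) / N) = X + Q c
    by move=> X; rewrite -[in RHS]H2; ring.
  have -> : Q c = 0 by rewrite /Q; have -> : (c.+1 == k) = false by apply/eqP; lia.
  by rewrite addr0 H1.
have ek : c = k by lia.
subst c.
have -> : (0 < (2 * k).+1 <= 2 * k)%N = false by apply/negbTE; lia.
have -> : (0 < (2 * k).+2 <= 2 * k)%N = false by apply/negbTE; lia.
have e1 : (2 * k).-1 = (2 * k.-1).+1 by lia.
have e2 : (2 * k).-2 = (2 * k.-1) by lia.
have -> : (0 < (2 * k) <= 2 * k)%N by apply/andP; split; lia.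
rewrite e1.
have -> : (0 < (2 * k.-1).+1 <= 2 * k)%N by apply/andP; split; lia.
rewrite !mulr0 !addr0 sub0r /=.
rewrite /F odd2 half2 /= uphalf2.
have [_ H2] := pq_lem a a' b b' (P k.-1) (Q k.-1) hN.
rewrite -/N in H2.
have EQ : Q k.-1 = at_ y k.+1 by rewrite /Q; have -> : (k.-1.+1 == k) by apply/eqP; lia.
rewrite EQ in H2 *; rewrite odd2 /=.
by rewrite -[in RHS]H2; ring.
Qed.

Lemma part2 (k : nat) (hk : (2 <= k)%N) (xi : 'I_4 -> Rdefinitions.R)
  (hxi : exists l : 'I_4, xi l <> 0%R) :
  (forall z : 'cV[C]_((k - 1)%N), (D1 k xi)^T *m z = 0 -> z = 0).
Proof.
have hN := Nnz xi hxi.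
move: hN; set a := sym_a xi; set a' := sym_a' xi; set b := sym_b xi; set b' := sym_b' xi => hN.
move=> z Hz; apply/colP => j; rewrite mxE.
have hj := ltn_ord j.
have h0 : (2 * j < 2 * k)%N by lia.
have h1 : ((2 * j).+1 < 2 * k)%N by lia.
have E0 := congr1 (fun M : 'M[C]_(2 * k, 1) => M (Ordinal h0) 0) Hz.
have E1 := congr1 (fun M : 'M[C]_(2 * k, 1) => M (Ordinal h1) 0) Hz.
rewrite /= D1T_mul mxE /= odd2 half2 at_ord -/a -/b in E0.
rewrite /= D1T_mul mxE /= odd2 /= uphalf2 at_ord -/a' -/b' in E1.
have : (a * a' + b * b') * z j 0 = 0.
  transitivity (- (a' * (- a * z j 0 + b * at_ z j) + b * (- b' * z j 0 + - a' * at_ z j))); first by ring.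
  by rewrite E0 E1; ring.
by move/eqP; rewrite mulf_eq0 (negbTE hN) /= => /eqP.
Qed.

Lemma part3a (k : nat) (hk : (2 <= k)%N) (xi : 'I_4 -> Rdefinitions.R) (z : 'cV[C]_((k - 1)%N)) :
  (D0 k xi)^T *m ((D1 k xi)^T *m z) = 0.
Proof.
apply/colP => c; rewrite D0T_mul !at_D1T mxE.
move: (nat_of_ord c) (ltn_ord c) => {}c hc.
case: c hc => [|c] hc.
  rewrite muln0 /=.
  have -> : (1 <= 2 * k)%N by lia.
  have -> : (2 <= 2 * k)%N by lia.
  rewrite /= (@at_out _ z 0) //; ring.
have e : (2 * c.+1 = (2 * c).+2)%N by lia.
rewrite e /= ?negbK odd2 ?half2 ?uphalf2 /=.
have -> : (2 * c < 2 * k)%N by lia.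
have -> : ((2 * c).+1 < 2 * k)%N by lia.
case: (ltnP c.+1 k) => hck.
  have -> : ((2 * c).+2 < 2 * k)%N by lia.
  have -> : ((2 * c).+3 < 2 * k)%N by lia.
  ring.
have -> : ((2 * c).+2 < 2 * k)%N = false by apply/negbTE; lia.
have -> : ((2 * c).+3 < 2 * k)%N = false by apply/negbTE; lia.
rewrite (@at_out _ z c.+1); last by apply/orP; right; lia.
ring.
Qed.

Lemma part3b (k : nat) (hk : (2 <= k)%N) (xi : 'I_4 -> Rdefinitions.R)
  (hxi : exists l : 'I_4, xi l <> 0%R) (v : 'cV[C]_((2 * k)%N)) :
  (D0 k xi)^T *m v = 0 -> exists z : 'cV[C]_((k - 1)%N), (D1 k xi)^T *m z = v.
Proof.
have hN := Nnz xi hxi.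
move: hN; set a := sym_a xi; set a' := sym_a' xi; set b := sym_b xi; set b' := sym_b' xi => hN.
move=> H.
have HY : forall c, (c <= k)%N -> - b' * at_ v (2 * c).+1 + a * at_ v (2 * c).+2
     - a' * at_ v (2 * c).-1 - b * at_ v (2 * c)%N = 0.
  move=> c hc; have hc' : (c < k.+1)%N by lia.
  have := congr1 (fun M : 'M[C]_(k.+1, 1) => M (Ordinal hc') 0) H.
  by rewrite /= D0T_mul mxE.
pose N := a * a' + b * b'.
pose Zf j := - (a' * at_ v (2 * j).+1 + b * at_ v (2 * j).+2) / N.
pose Zp h := - (a' * at_ v (2 * h).-1 + b * at_ v (2 * h)%N) / N.
exists (\col_(j < k - 1) Zf j).
have F1 : forall h, (h < k)%N -> at_ (\col_(j < k - 1) Zf j) h.+1 = Zf h.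
  move=> h hh; rewrite at_col /=.
  case: (leqP h.+1 (k - 1)) => hh2 //.
  have eh : h = k.-1 by lia.
  have := HY k (leqnn k).
  rewrite (@at_out _ v (2 * k).+1); last by apply/orP; right; lia.
  rewrite (@at_out _ v (2 * k).+2); last by apply/orP; right; lia.
  rewrite /Zf eh.
  have -> : (2 * k.-1).+2 = (2 * k)%N by lia.
  have -> : (2 * k.-1).+1 = (2 * k).-1 by lia.
  move=> E; apply/esym/eqP; rewrite mulf_eq0 oppr_eq0; apply/orP; left; apply/eqP.
  transitivity (- (- b' * 0 + a * 0 - a' * at_ v (2 * k).-1 - b * at_ v (2 * k))); first by ring.
  by rewrite E oppr0.
have F2 : forall h, (h < k)%N -> at_ (\col_(j < k - 1) Zf j) h = Zp h.
  case=> [|h] hh.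
    by rewrite /Zp muln0 /= !(@at_out _ _ 0) // !mulr0 addr0 oppr0 mul0r.
  rewrite at_col /=.
  have -> : (h < k - 1)%N by lia.
  rewrite /Zf /Zp.
  by have -> : (2 * h.+1 = (2 * h).+2)%N by lia.
apply/colP => c; rewrite D1T_mul -at_ord.
have hc := ltn_ord c.
have hh : (c./2 < k)%N.
  have := odd_double_half c; rewrite -mul2n; lia.
rewrite F1 // F2 //.
have [E1 E2] := ker_lem _ _ _ _ _ _ _ _ hN (HY _ (ltnW hh)).
rewrite -/N -/(Zf _) -/(Zp _) in E1 E2.
move: (nat_of_ord c) hh hc E1 E2 => {}c hh hc E1 E2.
have := odd_double_half c.
set h := c./2 in E1 E2 hh *.
case: (odd c) => /= ec; rewrite -ec -mul2n /=.
  by rewrite add1n E2 -/a' -/b'; ring.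
by rewrite add0n E1 -/a -/b.
Qed.

Theorem lemma4p1 (k : nat) (hk : (2 <= k)%N) (xi : 'I_4 -> Rdefinitions.R)
  (hxi : exists l : 'I_4, xi l <> 0%R) :
  (forall y : 'cV[C]_(k.+1), exists v : 'cV[C]_((2 * k)%N), (D0 k xi)^T *m v = y) /\
  (forall z : 'cV[C]_((k - 1)%N), (D1 k xi)^T *m z = 0 -> z = 0) /\
  (forall v : 'cV[C]_((2 * k)%N),
     (D0 k xi)^T *m v = 0 <-> exists z : 'cV[C]_((k - 1)%N), (D1 k xi)^T *m z = v).
Proof.
split; first exact: part1.
split; first exact: part2.
move=> v; split; first exact: part3b.
by case=> z <-; apply: part3a.
Qed.
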